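(* Let $X$ be a compact metric space with metric $d$, let $f\colon X\to X$ be a continuous map with the s-limit shadowing property, let $C\in\mathcal{C}(f)$ and $D\in\mathcal{D}(C)$, and let $\mathcal{G}$ be a full Furstenberg family. Then for every $n\ge2$, the set \[ B=\bigcap_{\epsilon>0}\{(x_1,\dots,x_n)\in[V^s(D)]^n\colon T_f(x_1,\dots,x_n;\epsilon)\in\mathcal{G}\} \] is a dense subset of $[V^s(D)]^n$.
   Context: A $\delta$-chain of $f$ ($\delta>0$) is a finite sequence $(x_i)_{i=0}^k$, $k\ge1$, of points of $X$ with $d(f(x_i),x_{i+1})\le\delta$ for $0\le i\le k-1$; it is a $\delta$-cycle if $x_0=x_k$, and $k$ is its length. Write $x\to y$ if for every $\delta>0$ there is a $\delta$-chain from $x$ to $y$. Let $CR(f)=\{x\in X\colon x\to x\}$; on $CR(f)$ let $x\leftrightarrow y$ iff $x\to y$ and $y\to x$. The equivalence classes of $\leftrightarrow$ are the chain components; $\mathcal{C}(f)$ is the set of chain components. For $C\in\mathcal{C}(f)$ and $\delta>0$, let $m=m(C,\delta)$ be the greatest common divisor of the lengths of all $\delta$-cycles of $f|_C$ (chains consisting of points of $C$), and for $x,y\in C$ let $x\sim_{C,\delta}y$ iff there is a $\delta$-chain $(x_i)_{i=0}^k$ of $f|_C$ with $x_0=x$, $x_k=y$ and $m\mid k$; this is an equivalence relation on $C$, and $\mathcal{D}(C,\delta)$ denotes its (finitely many) equivalence classes. Let $x\sim_C y$ iff $x\sim_{C,\delta}y$ for all $\delta>0$, and let $\mathcal{D}(C)$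 be the set of equivalence classes of $\sim_C$. For $D\in\mathcal{D}(C)$ and $\delta>0$, let $D_\delta$ be the unique element of $\mathcal{D}(C,\delta)$ containing $D$. Define $W^s(C)=\{x\in X\colon\lim_{i\to\infty}d(f^i(x),C)=0\}$ and \[ V^s(D)=\bigcap_{\delta>0}\{x\in W^s(C)\colon\lim_{i\to\infty}d(f^i(x),f^i(D_\delta))=0\}, \] where $d(p,A)=\inf_{a\in A}d(p,a)$. A sequence $(x_i)_{i\ge0}$ is a $\delta$-limit-pseudo orbit if $d(f(x_i),x_{i+1})\le\delta$ for all $i$ and $d(f(x_i),x_{i+1})\to0$; it is $\epsilon$-limit shadowed by $x$ if $d(f^i(x),x_i)\le\epsilon$ for all $i\ge0$ and $d(f^i(x),x_i)\to0$. $f$ has the s-limit shadowing property if for every $\epsilon>0$ there is $\delta>0$ such that every $\delta$-limit-pseudo orbit of $f$ is $\epsilon$-limit shadowed by some point of $X$. A Furstenberg family is a nonempty proper family $\mathcal{F}\subsetneq 2^{\mathbb{N}_0}$ ($\mathbb{N}_0=\{0,1,2,\dots\}$) that is hereditary upward ($A\in\mathcal{F}$, $A\subset B$ implies $B\in\mathcal{F}$). It is full if $\{i\in A\colon i\ge n\}\in\mathcal{F}$ for all $A\in\mathcal{F}$ and $n\ge0$. For $x_1,\dots,x_n\in X$ and $r>0$, $T_f(x_1,\dots,x_n;r)=\{i\in\mathbb{N}_0\colon\max_{1\le j<k\le n}d(f^i(x_j),f^i(x_k))<r\}$. *)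

(* Defs.v *)
From HB Require Import structures.
From mathcomp Require Import all_boot all_order all_algebra.
From mathcomp Require Import all_classical all_reals all_analysis.
Set Implicit Arguments. Unset Strict Implicit. Unset Printing Implicit Defensive.
Import Order.TTheory GRing.Theory Num.Theory numFieldNormedType.Exports.
Local Open Scope classical_set_scope.
Local Open Scope ring_scope.

Section Dyn.
Context {R : realType} {X : metricType R}.
Local Notation d := (@mdist R X).

Definition dist_set (p : X) (A : set X) : R := inf [set d p a | a in A].

Definition chain_in (A : set X) (f : X -> X) (delta : R) (s : nat -> X) (k : nat) : Prop :=
  (1 <= k)%N /\ (forall i, (i <= k)%N -> A (s i)) /\
  (forall i, (i < k)%N -> d (f (s i)) (s i.+1) <= delta).

Definition chain_rel (f : X -> X) (x y : X) : Prop :=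
  forall delta : R, 0 < delta ->
    exists s k, chain_in setT f delta s k /\ s 0%N = x /\ s k = y.

Definition CR (f : X -> X) : set X := [set x | chain_rel f x x].

Definition chain_component (f : X -> X) (C : set X) : Prop :=
  exists x, CR f x /\
    C = [set y | CR f y /\ chain_rel f x y /\ chain_rel f y x].

Definition cycle_lengths (f : X -> X) (C : set X) (delta : R) : set nat :=
  [set k | exists s, chain_in C f delta s k /\ s 0%N = s k].

Definition is_gcd_set (L : set nat) (m : nat) : Prop :=
  (forall k, L k -> (m %| k)%N) /\
  (forall m', (forall k, L k -> (m' %| k)%N) -> (m' %| m)%N).

Definition sim_Cd (f : X -> X) (C : set X) (delta : R) (x y : X) : Prop :=
  exists m, is_gcd_set (cycle_lengths f C delta) m /\
    exists s k, chain_in C f delta s k /\ s 0%N = x /\ s k = y /\ (m %| k)%N.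

Definition in_DC (f : X -> X) (C D : set X) : Prop :=
  exists x, C x /\
    D = [set y | C y /\ forall delta : R, 0 < delta -> sim_Cd f C delta x y].

(* D_delta: the element of D(C,delta) containing D *)
Definition D_delta (f : X -> X) (C D : set X) (delta : R) : set X :=
  [set y | C y /\ exists x, D x /\ sim_Cd f C delta x y].

Definition Ws (f : X -> X) (C : set X) : set X :=
  [set x | (fun i => dist_set (iter i f x) C) @ \oo --> (0 : R)].

Definition Vs (f : X -> X) (C D : set X) : set X :=
  [set x | Ws f C x /\ forall delta : R, 0 < delta ->
     (fun i => dist_set (iter i f x) (iter i f @` D_delta f C D delta)) @ \oo --> (0 : R)].

Definition s_limit_shadowing (f : X -> X) : Prop :=
  forall eps : R, 0 < eps -> exists2 delta : R, 0 < delta &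
    forall xs : nat -> X,
      (forall i, d (f (xs i)) (xs i.+1) <= delta) ->
      (fun i => d (f (xs i)) (xs i.+1)) @ \oo --> (0 : R) ->
      exists x : X, (forall i, d (iter i f x) (xs i) <= eps) /\
        (fun i => d (iter i f x) (xs i)) @ \oo --> (0 : R).

Definition T_f (f : X -> X) (n : nat) (x : 'I_n -> X) (r : R) : set nat :=
  [set i | forall j k : 'I_n, (j < k)%N -> d (iter i f (x j)) (iter i f (x k)) < r].

End Dyn.

Definition furstenberg_family (F : set (set nat)) : Prop :=
  F !=set0 /\ F <> setT /\ (forall A B, F A -> A `<=` B -> F B).

Definition full_family (F : set (set nat)) : Prop :=
  forall A, F A -> forall n : nat, F [set i | A i /\ (n <= i)%N].

(* Main.v *)
Require Import Defs.
From HB Require Import structures.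
From mathcomp Require Import all_boot all_order all_algebra.
From mathcomp Require Import all_classical all_reals all_analysis.
From mathcomp Require Import zify ring lra.
Import Order.TTheory GRing.Theory Num.Theory numFieldNormedType.Exports.
Local Open Scope classical_set_scope.
Local Open Scope ring_scope.
Set Implicit Arguments. Unset Strict Implicit. Unset Printing Implicit Defensive.
Section Chains.
Context {R : realType} {X : metricType R} (f : X -> X).
Local Notation d := (@mdist R X).

Inductive ch (A : set X) (e : R) : X -> X -> nat -> Prop :=
| ch0 u : A u -> ch A e u u 0
| chS u w v k : ch A e u w k -> A v -> d (f w) v <= e -> ch A e u v k.+1.
Arguments ch0 {A e u}.
Arguments chS {A e u w v k}.

Lemma ch_ends A e u v k : ch A e u v k -> A u /\ A v.
Proof. by elim=> // u0 w v0 k0 _ [] *; split. Qed.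

Lemma ch_cat A e u v w k1 k2 : ch A e u v k1 -> ch A e v w k2 -> ch A e u w (k1 + k2).
Proof.
move=> H1 H2; elim: H2 H1 => [u0 _ //|u0 w0 v0 k0 _ IH Av dv H1].
  by rewrite addn0.
by rewrite addnS; apply: chS (IH H1) Av dv.
Qed.

Lemma ch_mono A B e e' u v k : A `<=` B -> e <= e' -> ch A e u v k -> ch B e' u v k.
Proof.
move=> AB ee; elim=> [u0 Au|u0 w0 v0 k0 _ IH Av dv].
  by apply: ch0; apply: AB.
by apply: chS IH (AB _ Av) (le_trans dv ee).
Qed.

Lemma ch_last A e u v k : ch A e u v k.+1 ->
  exists w, [/\ ch A e u w k, A v & d (f w) v <= e].
Proof. by move=> H; inversion H; subst; exists w. Qed.

Lemma ch_zero A e u v : ch A e u v 0 -> u = v.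
Proof. by move=> H; inversion H. Qed.

Lemma ch_step A e u v : A u -> A v -> d (f u) v <= e -> ch A e u v 1.
Proof. by move=> Au Av dv; apply: chS (ch0 Au) Av dv. Qed.

Lemma ch_cons A e u w v k : A u -> d (f u) w <= e -> ch A e w v k -> ch A e u v k.+1.
Proof.
move=> Au dw H; have [Aw _] := ch_ends H.
by have := ch_cat (ch_step Au Aw dw) H; rewrite add1n.
Qed.

Lemma ch_first A e u v k : ch A e u v k.+1 ->
  exists w, [/\ A u, d (f u) w <= e & ch A e w v k].
Proof.
elim: k v => [|k IH] v H.
  have [w [H0 Av dv]] := ch_last H; have uw := ch_zero H0; subst w.
  by have [Au _] := ch_ends H0; exists v; split => //; apply: ch0.
have [w [H0 Av dv]] := ch_last H; have [w' [Au dw' H']] := IH _ H0.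
by exists w'; split => //; apply: chS H' Av dv.
Qed.

Lemma ch_perturb A e e2 u v v' k : ch A e u v k.+1 -> A v' -> d v v' <= e2 ->
  ch A (e + e2) u v' k.+1.
Proof.
move=> H Av' dvv; have [w [H0 Av dv]] := ch_last H.
have e2p : 0 <= e2 by rewrite (le_trans (mdist_ge0 _ _) dvv).
apply: (@chS _ _ _ w) => //.
  by apply: ch_mono H0 => //; rewrite lerDl.
by rewrite (le_trans (metric_triangle _ v _)) // lerD.
Qed.

Lemma ch_orbit A e u k : 0 <= e -> (forall i, (i <= k)%N -> A (iter i f u)) ->
  ch A e u (iter k f u) k.
Proof.
move=> e0; elim: k => [|k IH] HA; first by apply: ch0; apply: (HA 0%N).
apply: chS (IH _) (HA _ _) _ => //.
  by move=> i ik; apply: HA; rewrite (leq_trans ik).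
by rewrite iterS mdistxx.
Qed.

Lemma ch_seq A e u v k : ch A e u v k -> exists s : nat -> X,
  [/\ s 0%N = u, s k = v, (forall i, (i <= k)%N -> A (s i)) &
      (forall i, (i < k)%N -> d (f (s i)) (s i.+1) <= e)].
Proof.
elim=> [u0 Au|u0 w v0 k0 _ [s [s0 sk sA sd]] Av dv].
  by exists (fun=> u0); split => // i; rewrite leqn0 => /eqP ->.
exists (fun i => if (i <= k0)%N then s i else v0); split.
- by rewrite leq0n.
- by rewrite ltnn.
- by move=> i _; case: ifP => // /sA.
- move=> i ik; case: ifP => [ik0|]; last by move=> /negbT; lia.
  case: ifP => [ik1|]; first by apply: sd; lia.
  move=> /negbT ki.
  have -> : i = k0 by lia.
  by rewrite sk.
Qed.

Lemma seq_ch A e (s : nat -> X) k : (forall i, (i <= k)%N -> A (s i)) ->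
  (forall i, (i < k)%N -> d (f (s i)) (s i.+1) <= e) -> ch A e (s 0%N) (s k) k.
Proof.
elim: k => [|k IH] sA sd; first by apply: ch0; apply: sA.
apply: chS (IH _ _) (sA _ _) (sd _ _) => //.
- by move=> i ik; apply: sA; rewrite (leq_trans ik).
- by move=> i ik; apply: sd; rewrite (ltn_trans ik).
Qed.

Lemma chain_inE A e s k : chain_in A f e s k -> (1 <= k)%N /\ ch A e (s 0%N) (s k) k.
Proof. by move=> [k1 [sA sd]]; split => //; apply: seq_ch. Qed.

Lemma ch_chain_in A e u v k : (1 <= k)%N -> ch A e u v k ->
  exists s, [/\ chain_in A f e s k, s 0%N = u & s k = v].
Proof. by move=> k1 /ch_seq [s [s0 sk sA sd]]; exists s; split. Qed.

Definition rch e u v := exists k, (1 <= k)%N /\ ch setT e u v k.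

Lemma chain_relE u v : chain_rel f u v <-> forall e, 0 < e -> rch e u v.
Proof.
split=> [H e e0|H e e0].
  have [s [k [/chain_inE [k1 Hc] [s0 sk]]]] := H e e0.
  by exists k; split => //; rewrite -s0 -sk.
have [k [k1 Hc]] := H e e0.
by have [s [Hs s0 sk]] := ch_chain_in k1 Hc; exists s, k; split.
Qed.

Lemma rch_trans e u v w : rch e u v -> rch e v w -> rch e u w.
Proof.
move=> [k1 [k11 H1]] [k2 [k21 H2]]; exists (k1 + k2)%N; split.
  by rewrite (leq_trans k11) // leq_addr.
exact: ch_cat H1 H2.
Qed.

Lemma rch_mono e e' u v : e <= e' -> rch e u v -> rch e' u v.
Proof. by move=> ee [k [k1 H]]; exists k; split => //; apply: ch_mono H. Qed.

Lemma chain_rel_trans u v w : chain_rel f u v -> chain_rel f v w -> chain_rel f u w.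
Proof.
rewrite !chain_relE => H1 H2 e e0; exact: rch_trans (H1 e e0) (H2 e e0).
Qed.

End Chains.
Section Topo.
Context {R : realType} {X : metricType R}.
Local Notation d := (@mdist R X).

Lemma cont_at (f : X -> X) : continuous f -> forall x (e : R), 0 < e ->
  exists2 r : R, 0 < r & forall z, d x z < r -> d (f x) (f z) < e.
Proof.
move=> hf x e e0. have := hf x.
move/metricType_numDomainType.cvgrPdist_lt => /(_ e e0).
move/metricType_numDomainType.nbhs_mdistP. move=> [r r0 H].
by exists r.
Qed.

Lemma small_inv (e : R) : 0 < e -> exists k : nat, (k.+1%:R)^-1 < e.
Proof.
move=> e0; exists (Num.truncn e^-1).
have h := truncnS_gt e^-1.
rewrite -[X in _ < X]invrK ltf_pV2 ?posrE ?invr_gt0 //.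
Qed.

Lemma cover_nat (P : nat -> X -> Prop) : compact [set: X] ->
  (forall k k' s, (k <= k')%N -> P k s -> P k' s) ->
  (forall y, exists k, exists2 r : R, 0 < r & forall s, d y s < r -> P k s) ->
  exists k, forall s, P k s.
Proof.
move=> hX Pmono Ploc; apply: contrapT => hk.
have : forall k, exists s, ~ P k s.
  move=> k; apply: contrapT => nH; apply: hk; exists k => s.
  by apply: contrapT => nP; apply: nH; exists s.
move=> /choice [s Hs].
have := hX (s @ \oo) _ filterT.
move=> [y [_ Hy]].
have [k [r r0 Hr]] := Ploc y.
have FA : (s @ \oo) [set s n | n in [set n | (k <= n)%N]].
  by exists k => // n /= kn; exists n.
have NB : nbhs y [set z | d y z < r].
  by apply/metricType_numDomainType.nbhs_mdistP; exists r.
have [z [[n /= kn <-] zB]] := Hy _ _ FA NB.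
by apply: (Hs n); apply: (Pmono k) => //; apply: Hr.
Qed.

End Topo.
Section Comp.
Context {R : realType} {X : metricType R} (f : X -> X).
Context (hf : continuous f) (hX : compact [set: X]).
Context (C : set X) (xc : X) (hxc : CR f xc)
  (hC : C = [set y | CR f y /\ chain_rel f xc y /\ chain_rel f y xc]).
Local Notation d := (@mdist R X).

Lemma inC y : C y <->
  (forall e, 0 < e -> rch f e xc y) /\ (forall e, 0 < e -> rch f e y xc).
Proof.
rewrite hC /=; split.
  by move=> [_ [H1 H2]]; split; apply/(chain_relE f).
move=> [H1 H2]; have h1 := iffRL (chain_relE f _ _) H1.
have h2 := iffRL (chain_relE f _ _) H2.
by split => //; apply: chain_rel_trans h2 h1.
Qed.

Lemma C_rch a b : C a -> C b -> forall e, 0 < e -> rch f e a b.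
Proof.
move=> /inC [_ Ha] /inC [Hb _] e e0; exact: rch_trans (Ha e e0) (Hb e e0).
Qed.

Lemma C_xc : C xc.
Proof.
have H := iffLR (chain_relE f _ _) hxc.
by apply/inC; split.
Qed.

Lemma fC c : C c -> C (f c).
Proof.
move=> Cc; have [H1 H2] := iffLR (inC c) Cc; apply/inC; split => e e0.
  have [k [k1 Hk]] := H1 e e0; exists k.+1; split => //.
  by apply: chS Hk _ _; rewrite // mdistxx ltW.
have e20 : 0 < e / 2 by rewrite divr_gt0.
have [r r0 Hr] := cont_at hf (f c) e20.
pose e' := Num.min (e / 2) (r / 2).
have e'0 : 0 < e' by rewrite lt_min e20 divr_gt0.
have [k [k1 Hk]] := H2 e' e'0.
have [k2 [k21 Hk2]] := iffLR (chain_relE f _ _) hxc e' e'0.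
have := ch_cat Hk Hk2; case E: (k + k2)%N => [|[|j]]; first by lia.
  by lia.
move=> Hc; have [w1 [_ dw1 Hw1]] := ch_first Hc.
have [w2 [_ dw2 Hw2]] := ch_first Hw1.
have e'e : e' <= e.
  by rewrite /e' ge_min; apply/orP; left; rewrite ler_pdivrMr // ler_pMr // ler1n.
exists j.+1; split => //; apply: ch_cons (ch_mono _ e'e Hw2) => //.
have dc : d (f c) w1 < r.
  apply: (le_lt_trans dw1); rewrite /e' gt_min; apply/orP; right.
  by rewrite ltr_pdivrMr // ltr_pMr // ltr1n.
rewrite (le_trans (metric_triangle _ (f w1) _)) // [e]splitr lerD //.
  exact: ltW (Hr _ dc).
by rewrite (le_trans dw2) // /e' ge_min lexx.
Qed.

Lemma C_iter c i : C c -> C (iter i f c).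
Proof. by move=> Cc; elim: i => [//|i IH]; rewrite iterS; apply: fC. Qed.

Definition Good (g : R) s := exists s', [/\ C s', d s s' < g & d (f s) (f s') < g].

Lemma L2_eps g : 0 < g -> exists2 e : R, 0 < e &
  forall s, rch f e xc s -> rch f e s xc -> Good g s.
Proof.
move=> g0.
have [k Hk] : exists k, forall s, Good g s \/
  ~ (rch f (k.+1%:R^-1) xc s /\ rch f (k.+1%:R^-1) s xc).
  apply: cover_nat => //.
- move=> k k' s kk' [H|H]; [by left|right] => -[H1 H2]; apply: H.
  have le : (k'.+1%:R^-1 : R) <= k.+1%:R^-1.
    by rewrite lef_pV2 ?posrE ?ltr0n // ler_nat ltnS.
  by split; apply: rch_mono le _.
- move=> y; case: (pselect (C y)) => Cy.
    have [r1 r10 Hr1] := cont_at hf y g0.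
    exists 0%N, (Num.min r1 g); first by rewrite lt_min r10 g0.
    move=> s; rewrite lt_min => /andP [s1 s2]; left; exists y; split => //.
      by rewrite metric_sym.
    by rewrite metric_sym; apply: Hr1.
  have [e [e0 ne]] : exists e : R, 0 < e /\ ~ (rch f e xc y /\ rch f e y xc).
    apply: contrapT => nH; apply: Cy; apply/inC; split => e e0.
      by apply: contrapT => h; apply: nH; exists e; split => // -[].
    by apply: contrapT => h; apply: nH; exists e; split => // -[].
  have e20 : 0 < e / 2 by rewrite divr_gt0.
  have [k hk] := small_inv e20.
  have [r1 r10 Hr1] := cont_at hf y e20.
  exists k, (Num.min r1 (e / 2)); first by rewrite lt_min r10 e20.
  move=> s; rewrite lt_min => /andP [s1 s2]; right => -[[j [j1 Hj]] [l [l1 Hl]]].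
  apply: ne; split.
    case: j j1 Hj => [//|j] _ Hj.
    have sy : d s y <= e / 2 by rewrite metric_sym ltW.
    have Hp := ch_perturb Hj (I : [set: X] y) sy.
    exists j.+1; split => //; apply: ch_mono Hp => //.
    by rewrite [X in _ <= X]splitr lerD // ltW.
  case: l l1 Hl => [//|l] _ Hl.
  have [w [_ dw Hw]] := ch_first Hl.
  have ke : k.+1%:R^-1 <= e.
    rewrite ltW // (lt_le_trans hk) // ler_pdivrMr // ler_pMr // ler1n //.
  exists l.+1; split => //; apply: ch_cons (ch_mono _ ke Hw) => //.
  rewrite (le_trans (metric_triangle _ (f s) _)) // [X in _ <= X]splitr lerD //.
    exact: ltW (Hr1 _ s1).
  by rewrite (le_trans dw) // ltW.
exists (k.+1%:R^-1); first by rewrite invr_gt0 ltr0n.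
by move=> s H1 H2; case: (Hk s) => // H; exfalso; apply: H.
Qed.

Lemma L2 a b : C a -> C b -> forall del, 0 < del ->
  exists k, (1 <= k)%N /\ ch f C del a b k.
Proof.
move=> Ca Cb del del0.
have g0 : 0 < del / 3 by rewrite divr_gt0.
set g := del / 3 in g0.
have [e e0 He] := L2_eps g0.
pose e' := Num.min e g.
have e'0 : 0 < e' by rewrite lt_min e0 g0.
have e'e : e' <= e by rewrite /e' ge_min lexx.
have e'g : e' <= g by rewrite /e' ge_min lexx orbT.
have [k [k1 Hk]] := C_rch Ca Cb e'0.
suff claim : forall u v k, ch f [set: X] e' u v k -> C u -> rch f e' v xc ->
  forall v', C v' -> (k = 0%N -> v' = v) -> d v v' < g -> d (f v) (f v') < g ->
  ch f C del u v' k.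
  exists k; split => //; apply: (claim _ _ _ Hk Ca _ b Cb) => //.
  - by have [_ H] := iffLR (inC b) Cb; apply: H.
  - by rewrite mdistxx.
  - by rewrite mdistxx.
move=> u v k0; elim=> [u0 _ Cu0 _ v' Cv' h0 _ _|u0 w v0 j Hj IH _ dwv Cu0 rv v' Cv' _ dv dfv].
  by rewrite h0 //; apply: ch0.
have rw : rch f e' w xc.
  apply: rch_trans rv; exists 1%N; split => //; exact: ch_step.
have [w' [[Cw' dw dfw] hw0]] : exists w', [/\ C w', d w w' < g & d (f w) (f w') < g]
    /\ (j = 0%N -> w' = w).
  case: j Hj IH => [|j] Hj IH.
    have uw := ch_zero Hj; subst w; exists u0; split => //; split => //;
    by rewrite mdistxx.
  have := He w _ _.
  case.
  - apply: rch_mono e'e _; apply: rch_trans ((iffLR (inC u0) Cu0).1 e' e'0) _.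
    by exists j.+1; split.
  - exact: rch_mono e'e rw.
  by move=> w' [Cw' H1 H2]; exists w'; split.
apply: chS (IH Cu0 rw w' Cw' hw0 dw dfw) Cv' _.
rewrite (le_trans (metric_triangle _ (f w) _)) //.
rewrite metric_sym.
rewrite (le_trans (lerD (ltW dfw) (metric_triangle _ v0 _))) //.
rewrite [X in _ <= X](_ : del = g + (g + g)); last first.
  by rewrite /g; lra.
apply: lerD => //; apply: lerD; [exact: le_trans dwv e'g | exact: ltW dv].
Qed.

End Comp.
Section UB.
Context {R : realType} {X : metricType R} (f : X -> X).
Context (hf : continuous f) (hX : compact [set: X]).
Context (C : set X) (xc : X) (hxc : CR f xc)
  (hC : C = [set y | CR f y /\ chain_rel f xc y /\ chain_rel f y xc]).
Local Notation d := (@mdist R X).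

Lemma UBf h : C h -> forall del, 0 < del -> exists L, forall w, C w ->
  exists l, [/\ (l <= L)%N, (1 <= l)%N & ch f C del h w l].
Proof.
move=> Ch del del0.
apply: (@cover_nat R X (fun L s => C s -> exists l, [/\ (l <= L)%N, (1 <= l)%N & ch f C del h s l])) => //.
  move=> k k' s kk' H Cs; have [l [l1 l2 l3]] := H Cs; exists l; split => //.
  exact: leq_trans kk'.
move=> y; have d4 : 0 < del / 4 by rewrite divr_gt0.
case: (pselect (exists c, C c /\ d y c < del / 4)) => [[c [Cc dyc]]|nc].
  have d2 : 0 < del / 2 by rewrite divr_gt0.
  have [[|l] [l1 Hl]] := L2 hf hX hC Ch Cc d2; first by [].
  exists l.+1, (del / 4) => // s dys Cs; exists l.+1; split => //.
  have dcs : d c s <= del / 2.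
    rewrite (le_trans (metric_triangle _ y _)) // metric_sym.
    have -> : del / 2 = del / 4 + del / 4 by lra.
    by apply: lerD; apply: ltW.
  have := ch_perturb Hl Cs dcs; apply: ch_mono => //; lra.
exists 0%N, (del / 4) => // s dys Cs; exfalso; apply: nc; exists s; split => //.
Qed.

Lemma UBr h : C h -> forall del, 0 < del -> exists L, forall w, C w ->
  exists l, [/\ (l <= L)%N, (1 <= l)%N & ch f C del w h l].
Proof.
move=> Ch del del0.
apply: (@cover_nat R X (fun L s => C s -> exists l, [/\ (l <= L)%N, (1 <= l)%N & ch f C del s h l])) => //.
  move=> k k' s kk' H Cs; have [l [l1 l2 l3]] := H Cs; exists l; split => //.
  exact: leq_trans kk'.
move=> y; have d4 : 0 < del / 4 by rewrite divr_gt0.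
have [r1 r10 Hr1] := cont_at hf y d4.
case: (pselect (exists c, C c /\ d y c < r1)) => [[c [Cc dyc]]|nc].
  have d2 : 0 < del / 2 by rewrite divr_gt0.
  have [[|l] [l1 Hl]] := L2 hf hX hC Cc Ch d2; first by [].
  have [w1 [_ dw1 Hw1]] := ch_first Hl.
  exists l.+1, r1 => // s dys Cs; exists l.+1; split => //.
  apply: ch_cons Cs _ (ch_mono _ _ Hw1) => //; last by lra.
  rewrite (le_trans (metric_triangle _ (f y) _)) // (le_trans (lerD (lexx _) (metric_triangle _ (f c) _))) //.
  rewrite metric_sym.
  have h1 := Hr1 _ dys; have h2 := Hr1 _ dyc.
  lra.
exists 0%N, r1 => // s dys Cs; exfalso; apply: nc; exists s; split => //.
Qed.

End UB.
Section NatGcd.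

Definition gcdl (l : seq nat) := foldr gcdn 0%N l.

Lemma dvd_gcdl l x : x \in l -> (gcdl l %| x)%N.
Proof.
elim: l => [//|a l IH]; rewrite inE => /orP [/eqP ->|xl] /=.
  exact: dvdn_gcdl.
exact: dvdn_trans (dvdn_gcdr _ _) (IH xl).
Qed.

Lemma gcdl_dvd m l : (forall x, x \in l -> (m %| x)%N) -> (m %| gcdl l)%N.
Proof.
elim: l => [//|a l IH] H /=; rewrite dvdn_gcd H ?inE ?eqxx // IH // => x xl.
by apply: H; rewrite inE xl orbT.
Qed.

Lemma gcd_min (L : nat -> Prop) : (forall k, L k -> (0 < k)%N) ->
  exists l, (forall x, x \in l -> L x) /\ forall k, L k -> (gcdl l %| k)%N.
Proof.
move=> Lpos; case: (pselect (exists k, L k)) => [[k0 Lk0]|nL]; last first.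
  by exists [::]; split => // k Lk; exfalso; apply: nL; exists k.
suff H : forall n l, (forall x, x \in l -> L x) -> (0 < gcdl l)%N -> (gcdl l <= n)%N ->
  exists l, (forall x, x \in l -> L x) /\ forall k, L k -> (gcdl l %| k)%N.
  apply: (H k0 [:: k0]).
  - by move=> x; rewrite inE => /eqP ->.
  - by rewrite /= gcdn0; apply: Lpos.
  - by rewrite /= gcdn0.
elim=> [|n IH] l Hl g0 gn; first by move: g0 gn; case: (gcdl l).
case: (pselect (forall k, L k -> (gcdl l %| k)%N)) => [Hd|Hd].
  by exists l; split.
have [k [Lk nk]] : exists k, L k /\ ~ (gcdl l %| k)%N.
  apply: contrapT => nH; apply: Hd => k Lk; apply: contrapT => nd.
  by apply: nH; exists k.
apply: (IH (k :: l)).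
- by move=> x; rewrite inE => /orP [/eqP ->|]; [|apply: Hl].
- by rewrite /= gcdn_gt0 Lpos.
- rewrite /=.
  have dv : (gcdn k (gcdl l) %| gcdl l)%N by apply: dvdn_gcdr.
  have le := dvdn_leq g0 dv.
  have ne : gcdn k (gcdl l) != gcdl l.
    apply/negP => /eqP E; apply: nk; rewrite -E; exact: dvdn_gcdl.
  by move: le ne gn; lia.
Qed.

Lemma gcd_set_exists (L : nat -> Prop) : (forall k, L k -> (0 < k)%N) ->
  exists m, is_gcd_set L m.
Proof.
move=> Lpos; have [l [Hl Hd]] := gcd_min Lpos; exists (gcdl l); split => //.
by move=> m' Hm'; apply: gcdl_dvd => x xl; apply: Hm'; apply: Hl.
Qed.

Lemma is_gcd_uniq L m1 m2 : is_gcd_set L m1 -> is_gcd_set L m2 -> m1 = m2.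
Proof.
move=> [H1 H1'] [H2 H2']; apply/eqP; rewrite eqn_dvd.
by rewrite (H2' _ H1) (H1' _ H2).
Qed.

Variable (Sz : nat -> Prop) (Sz0 : Sz 0%N)
  (SzD : forall a b, Sz a -> Sz b -> Sz (a + b)%N).

Lemma SzM a k : Sz a -> Sz (k * a)%N.
Proof. by move=> Sa; elim: k => [|k IH]; rewrite ?mul0n // mulSn; apply: SzD. Qed.

Lemma frob l : (forall x, x \in l -> Sz x) ->
  exists M, forall k, (M <= k)%N -> Sz (k * gcdl l)%N.
Proof.
elim: l => [|s l IH] Hl; first by exists 0%N => k _; rewrite muln0.
have [M HM] : exists M, forall k, (M <= k)%N -> Sz (k * gcdl l)%N.
  by apply: IH => x xl; apply: Hl; rewrite inE xl orbT.
have Ss : Sz s by apply: Hl; rewrite inE eqxx.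
rewrite /=; set g0 := gcdl l in HM *.
case: (posnP s) => [s0|spos].
  by exists M => k kM; rewrite s0 gcd0n; apply: HM.
set g' := gcdn s g0.
have g'pos : (0 < g')%N by rewrite gcdn_gt0 spos.
have [t _ Ht] := Bezoutl g0 spos.
set q := (s %/ g')%N.
have sq : s = (q * g')%N by rewrite divnK // dvdn_gcdl.
have qpos : (0 < q)%N by move: spos; rewrite sq muln_gt0 => /andP [].
exists ((q * t + M * s) * g0)%N => k kM.
set j := (q - k %% q)%N.
set v := (j * t + M * s)%N.
have jq : (j <= q)%N by rewrite leq_subr.
have vM : (M <= v)%N.
  by rewrite /v (leq_trans _ (leq_addl _ _)) // leq_pmulr.
have vk : (v * g0 <= k * g')%N.
  apply: (@leq_trans k); last by rewrite leq_pmulr.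
  apply: leq_trans kM; rewrite leq_mul2r; apply/orP; right.
  by rewrite /v leq_add2r leq_mul2r jq orbT.
have d1 : (s %| (k + j) * g')%N.
  have kj : (k + j = (k %/ q).+1 * q)%N.
    rewrite mulSn; have := divn_eq k q; have := ltn_pmod k qpos; rewrite /j.
    set a := (k %/ q * q)%N; set b := (k %% q)%N; lia.
  by rewrite kj {1}sq; apply/dvdnP; exists (k %/ q).+1; rewrite mulnA.
have d2 : (s %| v * g0 + j * g')%N.
  have -> : (v * g0 + j * g' = j * (g' + t * g0) + (M * g0) * s)%N.
    rewrite /v; lia.
  by rewrite dvdn_add // ?dvdn_mull // dvdn_mull.
have d3 : (s %| k * g' - v * g0)%N.
  have -> : (k * g' - v * g0 = (k + j) * g' - (v * g0 + j * g'))%N.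
    by rewrite mulnDl subnDr.
  exact: dvdn_sub.
have -> : (k * g' = ((k * g' - v * g0) %/ s) * s + v * g0)%N.
  by rewrite divnK // subnK.
by apply: SzD; [apply: SzM|apply: HM].
Qed.

End NatGcd.
Section Core.
Context {R : realType} {X : metricType R} (f : X -> X).
Context (hf : continuous f) (hX : compact [set: X]).
Context (C : set X) (xc : X) (hxc : CR f xc)
  (hC : C = [set y | CR f y /\ chain_rel f xc y /\ chain_rel f y xc]).
Context (D : set X) (xd : X) (Cxd : C xd)
  (hD : D = [set y | C y /\ forall del : R, 0 < del -> sim_Cd f C del xd y]).
Local Notation d := (@mdist R X).

Lemma cyc_pos del k : cycle_lengths f C del k -> (0 < k)%N.
Proof. by move=> [s [[]]]. Qed.

Lemma m_exists del : exists m, is_gcd_set (cycle_lengths f C del) m.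
Proof. exact: gcd_set_exists (@cyc_pos del). Qed.

Lemma Res del m u l : is_gcd_set (cycle_lengths f C del) m -> ch f C del u u l ->
  (m %| l)%N.
Proof.
move=> [hm _]; case: l => [|l] H; first by rewrite dvdn0.
have [s [Hs s0 sk]] := ch_chain_in (isT : (1 <= l.+1)%N) H.
by apply: hm; exists s; rewrite s0 sk.
Qed.

Lemma sim_ch del m x y : is_gcd_set (cycle_lengths f C del) m ->
  sim_Cd f C del x y -> exists k, (m %| k)%N /\ ch f C del x y k.
Proof.
move=> hm [m' [hm' [s [k [Hs [s0 [sk mk]]]]]]].
have <- := is_gcd_uniq hm' hm.
have [_ H] := chain_inE Hs; exists k; split => //.
by rewrite -s0 -sk.
Qed.

Lemma xd_D : D xd.
Proof.
rewrite hD; split => // del del0.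
have [m hm] := m_exists del; exists m; split => //.
have [k [k1 Hk]] := L2 hf hX hC Cxd Cxd del0.
have [s [Hs s0 sk]] := ch_chain_in k1 Hk.
exists s, k; split => //; split => //; split => //.
by apply: hm.1; exists s; rewrite s0 sk.
Qed.

Lemma D_delta_ch del m p : 0 < del -> is_gcd_set (cycle_lengths f C del) m ->
  D_delta f C D del p -> exists P, (m %| P)%N /\ ch f C del xd p P.
Proof.
move=> del0 hm [Cp [a [Da sap]]].
move: Da; rewrite hD => -[Ca /(_ del del0) sxa].
have [k1 [m1 H1]] := sim_ch hm sxa; have [k2 [m2 H2]] := sim_ch hm sap.
by exists (k1 + k2)%N; split; [apply: dvdn_add|apply: ch_cat H1 H2].
Qed.

Lemma Schur del m : 0 < del -> is_gcd_set (cycle_lengths f C del) m ->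
  (0 < m)%N /\ exists M, forall k, (M <= k)%N -> ch f C del xd xd (k * m).
Proof.
move=> del0 hm.
pose Sz l := ch f C del xd xd l.
have Sz0 : Sz 0%N by apply: ch0.
have SzD : forall a b, Sz a -> Sz b -> Sz (a + b)%N by move=> a b; apply: ch_cat.
have [l [Hl Hd]] := @gcd_min (fun l => (0 < l)%N /\ Sz l) (fun k H => H.1).
have [M0 HM0] := frob Sz0 SzD (l := l) (fun x xl => (Hl x xl).2).
have [k0 [k01 Hk0]] := L2 hf hX hC Cxd Cxd del0.
have mk0 : (m %| k0)%N by apply: (Res hm Hk0).
have mpos : (0 < m)%N.
  by move: mk0 k01; case: (posnP m) => [->|//]; rewrite dvd0n => /eqP ->.
split => //.
have gm : (gcdl l %| m)%N.
  apply: hm.2 => k [s [Hs skk]].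
  have [k1 Hc] := chain_inE Hs.
  have Cc : C (s 0%N) by move: Hs => [_ [HA _]]; apply: HA.
  have [a [a1 Ha]] := L2 hf hX hC Cxd Cc del0.
  have [b [b1 Hb]] := L2 hf hX hC Cc Cxd del0.
  have g1 : (gcdl l %| a + b)%N.
    by apply: Hd; split; [lia|apply: ch_cat Ha Hb].
  have g2 : (gcdl l %| k + (a + b))%N.
    apply: Hd; split; first by lia.
    rewrite -skk in Hc; have := ch_cat (ch_cat Ha Hc) Hb.
    by have -> : (a + k + b = k + (a + b))%N by lia.
  by rewrite (dvdn_addl _ g1) in g2.
have [c mc] := dvdnP gm.
exists M0 => k kM; rewrite mc mulnA; apply: HM0.
have cpos : (0 < c)%N by move: mpos; rewrite mc muln_gt0 => /andP [].
by rewrite (leq_trans kM) // leq_pmulr.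
Qed.

Lemma arith1 (T N al be P Q ga L1 L2 MM : nat) :
  (N + (L1 + L2 + MM + 1) <= T)%N -> (al <= L2)%N -> (be <= L1)%N ->
  [/\ ((T - N - al - be) + ((P + N + al) + ((be + ga) + Q)) = (Q + T + ga) + P)%N,
     (MM <= T - N - al - be)%N & (al + (T - N - al - be) + be = T - N)%N].
Proof. by move=> *; split; lia. Qed.

Lemma CL del : 0 < del -> exists K, (1 <= K)%N /\ forall N T p q,
  D_delta f C D del p -> D_delta f C D del q -> (N + K <= T)%N ->
  ch f C del (iter N f p) (iter T f q) (T - N).
Proof.
move=> del0; have [m hm] := m_exists del.
have [mpos [M HM]] := Schur del0 hm.
have [L1 HL1] := UBf hf hX hC Cxd del0.
have [L2' HL2] := UBr hf hX hC Cxd del0.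
exists (L1 + L2' + M * m + 1)%N; split; first by lia.
move=> N T p q Dp Dq NT.
have [P [mP hP]] := D_delta_ch del0 hm Dp.
have [Q [mQ hQ]] := D_delta_ch del0 hm Dq.
have [_ Cp] := ch_ends hP; have [_ Cq] := ch_ends hQ.
have CNp := C_iter hf hxc hC N Cp; have CTq := C_iter hf hxc hC T Cq.
have oN : ch f C del p (iter N f p) N.
  by apply: ch_orbit; [exact: ltW|move=> i _; exact: (C_iter hf hxc hC i Cp)].
have oT : ch f C del q (iter T f q) T.
  by apply: ch_orbit; [exact: ltW|move=> i _; exact: (C_iter hf hxc hC i Cq)].
have [al [alL _ hal]] := HL2 _ CNp.
have [be [beL _ hbe]] := HL1 _ CTq.
have [ga [_ _ hga]] := HL2 _ CTq.
have r1 : (m %| P + N + al)%N by apply: (Res hm); apply: ch_cat (ch_cat hP oN) hal.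
have r2 : (m %| Q + T + ga)%N by apply: (Res hm); apply: ch_cat (ch_cat hQ oT) hga.
have r3 : (m %| be + ga)%N by apply: (Res hm); apply: ch_cat hbe hga.
have [E ZM E2] := arith1 P Q ga NT alL beL.
set Z := (T - N - al - be)%N in E ZM E2 *.
have hZ : (m %| Z)%N.
  have h : (m %| (Q + T + ga) + P)%N by apply: dvdn_add.
  rewrite -E in h.
  by rewrite dvdn_addl // in h; apply: dvdn_add => //; apply: dvdn_add.
have [z Zz] := dvdnP hZ.
have zM : (M <= z)%N.
  have : (M * m <= z * m)%N by rewrite -Zz.
  by rewrite leq_pmul2r.
have hZc : ch f C del xd xd Z by rewrite Zz; apply: HM.
by have := ch_cat (ch_cat hal hZc) hbe; rewrite E2.
Qed.

End Core.
Section Dist.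
Context {R : realType} {X : metricType R}.
Local Notation d := (@mdist R X).

Lemma dist_ge0 (p : X) A : 0 <= dist_set p A.
Proof.
rewrite /dist_set; case: (pselect (exists a, A a)) => [[a Aa]|nA].
  apply: lb_le_inf; first by exists (d p a); exists a.
  by move=> _ [b _ <-]; apply: mdist_ge0.
have -> : [set d p a | a in A] = set0.
  by apply/seteqP; split => // zz [a Aa _]; apply: nA; exists a.
by rewrite inf0.
Qed.

Lemma dist_tri (p q : X) A : dist_set p A <= d p q + dist_set q A.
Proof.
rewrite /dist_set; case: (pselect (exists a, A a)) => [[a Aa]|nA]; last first.
  have E : forall z, [set d z a | a in A] = set0.
    by move=> z; apply/seteqP; split => // zz [a Aa _]; apply: nA; exists a.
  by rewrite !E inf0 addr0 mdist_ge0.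
rewrite addrC -lerBlDr; apply: lb_le_inf; first by exists (d q a); exists a.
move=> _ [b Ab <-]; rewrite lerBlDr.
have lb : has_lbound [set d p a | a in A].
  by exists 0 => _ [c _ <-]; apply: mdist_ge0.
apply: (le_trans (ge_inf lb _)); first by exists b.
by rewrite addrC; apply: metric_triangle.
Qed.

Lemma dist_pick (p : X) A (e : R) : (exists a, A a) -> dist_set p A < e ->
  exists a, A a /\ d p a < e.
Proof.
move=> [a Aa] H; have [_ [b Ab <-] lt] := inf_lt (ex_intro _ (d p a) (ex_intro2 _ _ a Aa erefl)) H.
by exists b.
Qed.

Lemma cvg0_lt (u : nat -> R) : u @ \oo --> (0 : R) -> forall e, 0 < e ->
  exists N, forall i, (N <= i)%N -> u i < e.
Proof.
move=> /cvgrPdist_lt H e e0; have [N _ HN] := H e e0; exists N => i Hi.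
by have := HN i Hi; rewrite sub0r normrN => h; apply: le_lt_trans (ler_norm _) h.
Qed.

Lemma cvg0_intro (u : nat -> R) : (forall i, 0 <= u i) ->
  (forall e, 0 < e -> exists N, forall i, (N <= i)%N -> u i < e) -> u @ \oo --> (0 : R).
Proof.
move=> u0 H; apply/cvgrPdist_lt => e e0; have [N HN] := H e e0.
by exists N => // i /= Ni; rewrite sub0r normrN ger0_norm //; apply: HN.
Qed.

Lemma squeeze0 (u b w : nat -> R) : (forall i, 0 <= u i) ->
  (forall i, u i <= b i + w i) -> b @ \oo --> (0 : R) -> w @ \oo --> (0 : R) ->
  u @ \oo --> (0 : R).
Proof.
move=> u0 ubw hb hw; apply: cvg0_intro => // e e0.
have e2 : 0 < e / 2 by rewrite divr_gt0.
have [N1 H1] := cvg0_lt hb e2; have [N2 H2] := cvg0_lt hw e2.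
exists (maxn N1 N2) => i Ni.
have h1 := H1 i (leq_trans (leq_maxl _ _) Ni).
have h2 := H2 i (leq_trans (leq_maxr _ _) Ni).
have := ubw i; lra.
Qed.

End Dist.
Section Main.
Context {R : realType} {X : metricType R} (f : X -> X).
Context (hf : continuous f) (hX : compact [set: X]).
Context (C : set X) (xc : X) (hxc : CR f xc)
  (hC : C = [set y | CR f y /\ chain_rel f xc y /\ chain_rel f y xc]).
Context (D : set X) (xd : X) (Cxd : C xd)
  (hD : D = [set y | C y /\ forall del : R, 0 < del -> sim_Cd f C del xd y]).
Local Notation d := (@mdist R X).

Lemma V_asym x z : Vs f C D z ->
  (fun i => d (iter i f x) (iter i f z)) @ \oo --> (0 : R) -> Vs f C D x.
Proof.
move=> [Wz Vz] H; split.
  apply: squeeze0 H Wz => // i; [exact: dist_ge0|exact: dist_tri].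
move=> del del0; apply: squeeze0 H (Vz del del0) => // i.
  exact: dist_ge0.
exact: dist_tri.
Qed.

Lemma Ddel_ne del : 0 < del -> D_delta f C D del xd.
Proof.
move=> del0; have Dxd := xd_D hf hX hC Cxd hD.
split => //; exists xd; split => //.
by move: (Dxd); rewrite {1}hD => -[_ H]; apply: H.
Qed.

Lemma KL del y z : 0 < del -> Vs f C D y -> Vs f C D z ->
  exists T, ch f [set: X] del y (iter T f z) T.
Proof.
move=> del0 [_ Vy] [_ Vz].
have d2 : 0 < del / 2 by rewrite divr_gt0.
have [K [K1 HK]] := CL hf hX hxc hC Cxd hD d2.
have [Iy HIy] := cvg0_lt (Vy _ d2) d2.
have [Iz HIz] := cvg0_lt (Vz _ d2) d2.
set N := Iy.+1.
have ne : forall i, exists a, (iter i f @` D_delta f C D (del / 2)) a.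
  by move=> i; exists (iter i f xd); exists xd => //; apply: Ddel_ne.
have [_ [[p Dp <-] dp]] := dist_pick (ne N) (HIy N (leqnSn _)).
set T := maxn (N + K) Iz.
have [_ [[q Dq <-] dq]] := dist_pick (ne T) (HIz T (leq_maxr _ _)).
have Hc := HK N T p q Dp Dq (leq_maxl _ _).
exists T.
have NT : (N <= T)%N by rewrite (leq_trans (leq_addr K N)) // leq_maxl.
have H1 : ch f [set: X] del y (iter N f p) N.
  apply: (@chS _ _ _ _ _ _ (iter Iy f y)).
    by apply: ch_orbit => //; exact: ltW.
  by [].
  by rewrite -iterS; apply: (le_trans (ltW dp)); lra.
have H2 : ch f [set: X] del (iter N f p) (iter T f z) (T - N).
  have : (1 <= T - N)%N.
    by rewrite (leq_trans K1) // leq_subRL ?leq_maxl.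
  move: Hc; case: (T - N)%N => [//|t] Hc _.
  have dq' : d (iter T f q) (iter T f z) < del / 2 by rewrite metric_sym.
  have := ch_perturb (ch_mono (subsetT C) (lexx _) Hc) (I : [set: X] (iter T f z))
    (ltW dq').
  by apply: ch_mono => //; lra.
by have := ch_cat H1 H2; rewrite subnKC.
Qed.

End Main.
Unset Implicit Arguments.

Theorem theorem1p1 (R : realType) (X : metricType R) (f : X -> X)
  (C D : set X) (G : set (set nat)) (n : nat) :
  compact [set: X] -> continuous f -> s_limit_shadowing f ->
  chain_component f C -> in_DC f C D ->
  furstenberg_family G -> full_family G -> (2 <= n)%N ->
  let V := Vs f C D in
  let B := [set x : 'I_n -> X | (forall j, V (x j)) /\
              forall eps : R, 0 < eps -> G (T_f f x eps)] in
  (* B is a subset of V^n ... *)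
  (forall x, B x -> forall j, V (x j)) /\
  (* ... and B is dense in V^n (for the product, i.e. max, metric) *)
  (forall y : 'I_n -> X, (forall j, V (y j)) ->
     forall r : R, 0 < r -> exists2 x, B x & forall j, mdist (x j) (y j) < r).
Proof.
move=> hX hf hsh [xc [hxc hC]] [xd [Cxd hD]] [[A0 GA0] [_ Gup]] Gfull n2 V B.
split; first by move=> x [].
move=> y Vy r r0.
have r2 : 0 < r / 2 by rewrite divr_gt0.
have [del del0 Hsh] := hsh _ r2.
have n0 : (0 < n)%N by lia.
set j0 : 'I_n := Ordinal n0.
set z := y j0.
have per : forall j, exists x, [/\ mdist x (y j) < r, V x &
    (fun i => mdist (iter i f x) (iter i f z)) @ \oo --> (0 : R)].
  move=> j.
  have [T HT] := KL hf hX hxc hC Cxd hD del0 (Vy j) (Vy j0).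
  have [s [s0 sT _ sd]] := ch_seq HT.
  pose xi i := if (i <= T)%N then s i else iter i f z.
  have xiT : forall i, (T <= i)%N -> xi i = iter i f z.
    move=> i Ti; rewrite /xi; case: ifP => // iT.
    by have -> : i = T by apply/eqP; rewrite eqn_leq iT Ti.
  have step : forall i, (i < T)%N -> mdist (f (xi i)) (xi i.+1) <= del.
    by move=> i iT; rewrite /xi iT (ltnW iT); apply: sd.
  have step2 : forall i, (T <= i)%N -> mdist (f (xi i)) (xi i.+1) = 0.
    by move=> i Ti; rewrite !xiT ?(leq_trans Ti) // iterS mdistxx.
  have st1 : forall i, mdist (f (xi i)) (xi i.+1) <= del.
    move=> i; case: (ltnP i T) => iT; first exact: step.
    by rewrite step2 // ltW.
  have st2 : (fun i => mdist (f (xi i)) (xi i.+1)) @ \oo --> (0 : R).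
    apply: cvg0_intro => [i|e e0]; first exact: mdist_ge0.
    by exists T => i Ti; rewrite step2.
  have [x [Hx1 Hx2]] := Hsh xi st1 st2.
  have asym : (fun i => mdist (iter i f x) (iter i f z)) @ \oo --> (0 : R).
    apply: cvg0_intro => [i|e e0]; first exact: mdist_ge0.
    have [N HN] := cvg0_lt Hx2 e0; exists (maxn N T) => i Ni.
    rewrite -xiT; first by apply: HN; exact: leq_trans (leq_maxl _ _) Ni.
    exact: leq_trans (leq_maxr _ _) Ni.
  exists x; split => //.
    have := Hx1 0%N; rewrite /= /xi leq0n s0 => h.
    by apply: (le_lt_trans h); rewrite ltr_pdivrMr // ltr_pMr // ltr1n.
  exact: V_asym (Vy j0) asym.
have [x Hx] := choice per.
exists x => [|j]; last by have [] := Hx j.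
split=> [j|eps eps0]; first by have [] := Hx j.
have e2 : 0 < eps / 2 by rewrite divr_gt0.
have perN : forall j, exists N, forall i, (N <= i)%N ->
    mdist (iter i f (x j)) (iter i f z) < eps / 2.
  by move=> j; have [_ _ H] := Hx j; have [N HN] := cvg0_lt H e2; exists N.
have [Nf HNf] := choice perN.
set M := (\max_(j : 'I_n) Nf j)%N.
have GT : G [set: nat] by apply: Gup GA0 _.
have GM := Gfull _ GT M.
apply: Gup GM _ => i [_ Mi] j k _.
have hj := HNf j i (leq_trans (leq_bigmax j) Mi).
have hk := HNf k i (leq_trans (leq_bigmax k) Mi).
rewrite (le_lt_trans (metric_triangle _ (iter i f z) _)) //.
rewrite metric_sym in hk.
lra.
Qed.
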